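(* Let $E_1 := \{x\in\mathbb{R}^4 : x_1^2+x_2^2+x_3^2 \le x_4^2,\ x_4\ge0\}$, $E_2 := \{\lambda(-1,-1,0,-1) : \lambda\ge0\}$, $E_3 := \{\lambda(-1,1,0,-1):\lambda\ge0\}$ and $E := E_1\cup E_2\cup E_3$. Then $E$ is closed, $\lambda E\subseteq E$ for all $\lambda\ge0$, $E\cap(-E)=\{0\}$, and $\operatorname{conv}(E) = E_1+E_2+E_3$ is not closed; specifically $(0,0,1,0)$ lies in the closure of $\operatorname{conv}(E)$ but not in $\operatorname{conv}(E)$.
   Context: $\operatorname{conv}(E)$ denotes the convex hull of $E$. *)

(* Defs.v *)
From HB Require Import structures.
From mathcomp Require Import all_boot all_order all_algebra.
From mathcomp Require Import all_classical all_reals all_analysis.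
Set Implicit Arguments. Unset Strict Implicit. Unset Printing Implicit Defensive.
Import Order.TTheory GRing.Theory Num.Theory.
Import numFieldNormedType.Exports.
Local Open Scope classical_set_scope.
Local Open Scope ring_scope.

(* Points of R^4 are row vectors 'rV[R]_4; coordinates x_1..x_4 are
   x ord0 (crd 0) .. x ord0 (crd 3). *)
Definition crd (k : nat) : 'I_4 := inord k.

Definition vec4 (R : realType) (a b c d : R) : 'rV[R]_4 :=
  \row_(i < 4) nth 0 [:: a; b; c; d] i.

Definition conv_hull (R : realType) (n : nat) (A : set 'rV[R]_n) : set 'rV[R]_n :=
  [set x | exists (m : nat) (w : 'I_m -> R) (v : 'I_m -> 'rV[R]_n),
      (forall i, 0 <= w i) /\ \sum_(i < m) w i = 1 /\
      (forall i, A (v i)) /\ x = \sum_(i < m) w i *: v i].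

Definition minkowski_sum (R : realType) (n : nat) (A B : set 'rV[R]_n) : set 'rV[R]_n :=
  [set a + b | a in A & b in B].

Definition E1 (R : realType) : set 'rV[R]_4 :=
  [set x | (x ord0 (crd 0)) ^+ 2 + (x ord0 (crd 1)) ^+ 2 + (x ord0 (crd 2)) ^+ 2
             <= (x ord0 (crd 3)) ^+ 2 /\ 0 <= x ord0 (crd 3)].
Definition E2 (R : realType) : set 'rV[R]_4 :=
  [set x | exists2 l : R, 0 <= l & x = l *: vec4 (-1) (-1) 0 (-1)].
Definition E3 (R : realType) : set 'rV[R]_4 :=
  [set x | exists2 l : R, 0 <= l & x = l *: vec4 (-1) 1 0 (-1)].
Arguments E1 R : clear implicits.
Arguments E2 R : clear implicits.
Arguments E3 R : clear implicits.
Definition E (R : realType) : set 'rV[R]_4 := E1 R `|` E2 R `|` E3 R.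
Arguments E R : clear implicits.

(* Main.v *)
Require Import Defs.
From HB Require Import structures.
From mathcomp Require Import all_boot all_order all_algebra.
From mathcomp Require Import all_classical all_reals all_analysis.
From mathcomp Require Import ring lra.
Import Order.TTheory GRing.Theory Num.Theory.
Import numFieldNormedType.Exports.
Local Open Scope classical_set_scope.
Local Open Scope ring_scope.

Section S.
Variable R : realType.
Notation c k x := ((x : 'rV[R]_4) ord0 (crd k)).

Lemma crdE k (H : (k < 4)%N) : crd k = Ordinal H.
Proof. by apply: val_inj; rewrite /= /crd inordK. Qed.

Lemma rv4P (x y : 'rV[R]_4) : c 0 x = c 0 y -> c 1 x = c 1 y -> c 2 x = c 2 y ->
  c 3 x = c 3 y -> x = y.
Proof.
move=> h0 h1 h2 h3; apply/rowP => -[[|[|[|[|k]]]] Hk] //.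
- by rewrite (_ : Ordinal Hk = crd 0) // crdE.
- by rewrite (_ : Ordinal Hk = crd 1) // crdE.
- by rewrite (_ : Ordinal Hk = crd 2) // crdE.
- by rewrite (_ : Ordinal Hk = crd 3) // crdE.
Qed.

Lemma cD k x y : c k (x + y) = c k x + c k y. Proof. by rewrite mxE. Qed.
Lemma cZ k l x : c k (l *: x) = l * c k x. Proof. by rewrite mxE. Qed.
Lemma cN k x : c k (- x) = - c k x. Proof. by rewrite mxE. Qed.
Lemma c0 k : c k (0 : 'rV[R]_4) = 0. Proof. by rewrite mxE. Qed.
Lemma cvec a b d e : c 0 (vec4 a b d e) = a /\ c 1 (vec4 a b d e) = b /\
  c 2 (vec4 a b d e) = d /\ c 3 (vec4 a b d e) = e.
Proof. by rewrite !crdE !mxE. Qed.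

Lemma E1P x : E1 R x <-> c 0 x ^+ 2 + c 1 x ^+ 2 + c 2 x ^+ 2 <= c 3 x ^+ 2 /\ 0 <= c 3 x.
Proof. by []. Qed.

Lemma E2P x : E2 R x <-> [/\ c 0 x = c 3 x, c 1 x = c 3 x, c 2 x = 0 & c 3 x <= 0].
Proof.
split.
  case=> l l0 ->; have [h0 [h1 [h2 h3]]] := cvec (-1 : R) (-1) 0 (-1).
  rewrite !cZ h0 h1 h2 h3; split; lra.
case=> h0 h1 h2 h3; exists (- c 3 x); first lra.
have [g0 [g1 [g2 g3]]] := cvec (-1 : R) (-1) 0 (-1).
apply: rv4P; rewrite !cZ ?g0 ?g1 ?g2 ?g3; lra.
Qed.

Lemma E3P x : E3 R x <-> [/\ c 0 x = c 3 x, c 1 x = - c 3 x, c 2 x = 0 & c 3 x <= 0].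
Proof.
split.
  case=> l l0 ->; have [h0 [h1 [h2 h3]]] := cvec (-1 : R) 1 0 (-1).
  rewrite !cZ h0 h1 h2 h3; split; lra.
case=> h0 h1 h2 h3; exists (- c 3 x); first lra.
have [g0 [g1 [g2 g3]]] := cvec (-1 : R) 1 0 (-1).
apply: rv4P; rewrite !cZ ?g0 ?g1 ?g2 ?g3; lra.
Qed.
Lemma cc k : continuous (fun x : 'rV[R]_4 => c k x).
Proof. exact: coord_continuous. Qed.

Lemma closed_le0 (g : 'rV[R]_4 -> R) : continuous g -> closed [set x | g x <= 0].
Proof. by move=> hg; apply: (@preimage_closed _ _ g [set y : R | y <= 0]); [move=> ? _; apply: hg|exact: closed_le]. Qed.

Lemma closed_eq0 (g : 'rV[R]_4 -> R) : continuous g -> closed [set x | g x = 0].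
Proof. by move=> hg; apply: (@preimage_closed _ _ g [set y : R | y = 0]); [move=> ? _; apply: hg|exact: closed_eq]. Qed.

Lemma contB (f g : 'rV[R]_4 -> R) : continuous f -> continuous g -> continuous (fun x => f x - g x).
Proof. by move=> hf hg x; exact: (continuousB (hf x) (hg x)). Qed.
Lemma contD (f g : 'rV[R]_4 -> R) : continuous f -> continuous g -> continuous (fun x => f x + g x).
Proof. by move=> hf hg x; exact: (continuousD (hf x) (hg x)). Qed.
Lemma contX (f : 'rV[R]_4 -> R) : continuous f -> continuous (fun x => f x ^+ 2).
Proof. by move=> hf x; exact: (continuousM (hf x) (hf x)). Qed.
Lemma contN (f : 'rV[R]_4 -> R) : continuous f -> continuous (fun x => - f x).
Proof. by move=> hf x; exact: (continuousN (hf x)). Qed.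

Lemma closedE : closed (E R).
Proof.
have h0 := cc 0; have h1 := cc 1; have h2 := cc 2; have h3 := cc 3.
apply: closedU; [apply: closedU|].
- rewrite (_ : E1 R = [set x | (c 0 x ^+ 2 + c 1 x ^+ 2 + c 2 x ^+ 2) - c 3 x ^+ 2 <= 0]
     `&` [set x | - c 3 x <= 0]).
    apply: closedI; apply: closed_le0.
      by apply: contB; [apply: contD; [apply: contD|]|]; apply: contX.
    exact: contN.
  apply/seteqP; split => x /=; rewrite E1P; case=> a b; split; lra.
- rewrite (_ : E2 R = [set x | c 0 x - c 3 x = 0] `&` [set x | c 1 x - c 3 x = 0]
     `&` [set x | c 2 x = 0] `&` [set x | c 3 x <= 0]).
    apply: closedI; [apply: closedI; [apply: closedI|]|].
    + by apply: closed_eq0; apply: contB.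
    + by apply: closed_eq0; apply: contB.
    + exact: closed_eq0.
    + exact: closed_le0.
  apply/seteqP; split => x /=; rewrite E2P.
    by case=> a b d e; (repeat split); lra.
  by case=> [[[a b] d] e]; split; lra.
- rewrite (_ : E3 R = [set x | c 0 x - c 3 x = 0] `&` [set x | c 1 x + c 3 x = 0]
     `&` [set x | c 2 x = 0] `&` [set x | c 3 x <= 0]).
    apply: closedI; [apply: closedI; [apply: closedI|]|].
    + by apply: closed_eq0; apply: contB.
    + by apply: closed_eq0; apply: contD.
    + exact: closed_eq0.
    + exact: closed_le0.
  apply/seteqP; split => x /=; rewrite E3P.
    by case=> a b d e; (repeat split); lra.
  by case=> [[[a b] d] e]; split; lra.
Qed.
Lemma E1Z l x : 0 <= l -> E1 R x -> E1 R (l *: x).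
Proof.
move=> l0; rewrite !E1P !cZ => -[a b]; split; last exact: mulr_ge0.
rewrite !exprMn -!mulrDr; apply: ler_wpM2l => //; exact: sqr_ge0.
Qed.
Lemma E2Z l x : 0 <= l -> E2 R x -> E2 R (l *: x).
Proof. by move=> l0 [m m0 ->]; exists (l * m); [exact: mulr_ge0|rewrite scalerA]. Qed.
Lemma E3Z l x : 0 <= l -> E3 R x -> E3 R (l *: x).
Proof. by move=> l0 [m m0 ->]; exists (l * m); [exact: mulr_ge0|rewrite scalerA]. Qed.
Lemma EZ l x : 0 <= l -> E R x -> E R (l *: x).
Proof.
move=> l0 [[h|h]|h]; [left; left; exact: E1Z|left; right; exact: E2Z|right; exact: E3Z].
Qed.

Lemma E1D x y : E1 R x -> E1 R y -> E1 R (x + y).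
Proof.
rewrite !E1P !cD => -[a b] [d e]; split; last lra.
set x0 := c 0 x in a *; set x1 := c 1 x in a *; set x2 := c 2 x in a *; set x3 := c 3 x in a b *.
set y0 := c 0 y in d *; set y1 := c 1 y in d *; set y2 := c 2 y in d *; set y3 := c 3 y in d e *.
have cs : (x0*y0 + x1*y1 + x2*y2)^+2 <= (x3 * y3)^+2.
  apply: (@le_trans _ _ ((x0^+2+x1^+2+x2^+2)*(y0^+2+y1^+2+y2^+2))).
    have h : 0 <= (x0*y1-x1*y0)^+2 + (x0*y2-x2*y0)^+2 + (x1*y2-x2*y1)^+2.
      by rewrite !addr_ge0 ?sqr_ge0.
    nra.
  rewrite exprMn; apply: ler_pM => //; rewrite ?addr_ge0 ?sqr_ge0 //.
have : x0*y0 + x1*y1 + x2*y2 <= x3 * y3.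
  have := mulr_ge0 b e; nra.
nra.
Qed.
Lemma E2D x y : E2 R x -> E2 R y -> E2 R (x + y).
Proof. by move=> [l l0 ->] [m m0 ->]; exists (l + m); [exact: addr_ge0|rewrite scalerDl]. Qed.
Lemma E3D x y : E3 R x -> E3 R y -> E3 R (x + y).
Proof. by move=> [l l0 ->] [m m0 ->]; exists (l + m); [exact: addr_ge0|rewrite scalerDl]. Qed.

Definition M := minkowski_sum (minkowski_sum (E1 R) (E2 R)) (E3 R).

Lemma MP x : M x <-> exists a b d, [/\ E1 R a, E2 R b, E3 R d & x = a + b + d].
Proof.
split.
  by case=> _ [a ha [b hb <-]] [d hd <-]; exists a, b, d.
by case=> a [b [d [ha hb hd ->]]]; exists (a + b) => //; [exists a => //; exists b|exists d].
Qed.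

Lemma M0 : M 0.
Proof.
apply/MP; exists 0, 0, 0; split; rewrite ?addr0 //.
- by rewrite E1P !c0; split; lra.
- by exists 0; rewrite ?scale0r.
- by exists 0; rewrite ?scale0r.
Qed.

Lemma MD x y : M x -> M y -> M (x + y).
Proof.
move=> /MP [a [b [d [ha hb hd ->]]]] /MP [a' [b' [d' [ha' hb' hd' ->]]]].
apply/MP; exists (a + a'), (b + b'), (d + d'); split.
- exact: E1D. - exact: E2D. - exact: E3D.
- by rewrite addrACA; congr (_ + _); exact: addrACA.
Qed.

Lemma ME l x : 0 <= l -> E R x -> M (l *: x).
Proof.
move=> l0 hx; have := @EZ l x l0 hx; move: (l *: x) => y [[h|h]|h]; apply/MP.
- exists y, 0, 0; split; rewrite ?addr0 //; by exists 0; rewrite ?scale0r.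
- exists 0, y, 0; split; rewrite ?addr0 ?add0r //; first by rewrite E1P !c0; split; lra.
  by exists 0; rewrite ?scale0r.
- exists 0, 0, y; split; rewrite ?addr0 ?add0r //; first by rewrite E1P !c0; split; lra.
  by exists 0; rewrite ?scale0r.
Qed.

Lemma convE : conv_hull (E R) = M.
Proof.
apply/seteqP; split => x.
  case=> m [w [v [w0 [_ [hv ->]]]]].
  elim: m w v w0 hv => [|m IH] w v w0 hv; first by rewrite big_ord0; exact: M0.
  rewrite big_ord_recr /=; apply: MD; last exact: ME.
  exact: (IH (fun i => w (widen_ord (leqnSn m) i)) (fun i => v (widen_ord (leqnSn m) i))).
move=> /MP [a [b [d [ha hb hd ->]]]].
exists 3, (fun _ => 3^-1), [ffun i : 'I_3 => 3 *: nth 0 [:: a; b; d] i]; split.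
  by move=> i; rewrite invr_ge0.
split; first by rewrite !big_ord_recr big_ord0 /=; field.
split.
  move=> i; rewrite ffunE; apply: EZ => //.
  by case: i => [[|[|[|k]]] Hk] //=; [left; left|left; right|right].
rewrite !big_ord_recr big_ord0 /= !ffunE /= !scalerA mulVf ?scale1r ?add0r //.
Qed.

Lemma Ecoord x : E R x ->
  (c 0 x ^+ 2 + c 1 x ^+ 2 + c 2 x ^+ 2 <= c 3 x ^+ 2 /\ 0 <= c 3 x) \/
  [/\ c 0 x = c 3 x, c 1 x = c 3 x, c 2 x = 0 & c 3 x <= 0] \/
  [/\ c 0 x = c 3 x, c 1 x = - c 3 x, c 2 x = 0 & c 3 x <= 0].
Proof. by case=> [[/E1P|/E2P]|/E3P]; tauto. Qed.

Lemma capE : E R `&` [set - x | x in E R] = [set 0].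
Proof.
apply/seteqP; split => x /=.
  case=> hx [y hy hyx].
  have cx k : c k x = - c k y by rewrite -hyx cN.
  move: (@Ecoord x hx) (@Ecoord y hy); rewrite !cx.
  set y0 := c 0 y; set y1 := c 1 y; set y2 := c 2 y; set y3 := c 3 y.
  move=> H1 H2.
  have [h0 [h1 [h2 h3]]] : [/\ y0 = 0, y1 = 0, y2 = 0 & y3 = 0].
    case: H1 => [[a b]|[[a b d e]|[a b d e]]]; case: H2 => [[a' b']|[[a' b' d' e']|[a' b' d' e']]]; split; nra.
  by apply: rv4P; rewrite !cx !c0 -/y0 -/y1 -/y2 -/y3 ?h0 ?h1 ?h2 ?h3 oppr0.
move=> ->; split.
  by left; right; exists 0; rewrite ?scale0r.
by exists 0; [left; right; exists 0; rewrite ?scale0r|rewrite oppr0].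
Qed.

Definition p := vec4 (0:R) 0 1 0.

Lemma notin : ~ M p.
Proof.
move=> /MP [a [b [d [/E1P [ha ha'] /E2P [b0 b1 b2 b3] /E3P [d0 d1 d2 d3] hp]]]].
have [p0 [p1 [p2 p3]]] := cvec (0:R) 0 1 0.
have e k : c k p = c k a + c k b + c k d by rewrite hp !cD.
move: (e 0) (e 2) (e 3); rewrite -/p p0 p2 p3 b0 b2 d0 d2 => e0 e2 e3.
nra.
Qed.

Lemma inclos : closure M p.
Proof.
move=> B /nbhs_ballP [e e0 hB].
set eps := e / 2.
have eps0 : 0 < eps by rewrite divr_gt0.
set t := (2 * eps)^-1.
have ht : t * (2 * eps) = 1 by rewrite mulVf // mulf_neq0 // gt_eqF.
set a := vec4 t 0 1 (t + eps).
set q := a + (t / 2) *: vec4 (-1) (-1) 0 (-1) + (t / 2) *: vec4 (-1) 1 0 (-1).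
have hq : q = vec4 0 0 1 eps.
  have [a0 [a1 [a2 a3]]] := cvec t 0 1 (t + eps).
  have [g0 [g1 [g2 g3]]] := cvec (-1 : R) (-1) 0 (-1).
  have [f0 [f1 [f2 f3]]] := cvec (-1 : R) 1 0 (-1).
  have [r0 [r1 [r2 r3]]] := cvec 0 0 1 eps.
  apply: rv4P; rewrite !cD !cZ ?a0 ?a1 ?a2 ?a3 ?g0 ?g1 ?g2 ?g3 ?f0 ?f1 ?f2 ?f3 ?r0 ?r1 ?r2 ?r3; lra.
exists q; split.
  apply/MP; exists a, ((t / 2) *: vec4 (-1) (-1) 0 (-1)), ((t / 2) *: vec4 (-1) 1 0 (-1)).
  have t0 : 0 <= t / 2 by rewrite divr_ge0 // ltW // invr_gt0 mulr_gt0.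
  split => //.
  - have [a0 [a1 [a2 a3]]] := cvec t 0 1 (t + eps).
    rewrite E1P a0 a1 a2 a3; split; first nra.
    have : 0 < t by rewrite invr_gt0 mulr_gt0.
    lra.
  - by exists (t / 2).
  - by exists (t / 2).
apply: hB; rewrite hq; split => // i j; rewrite (ord1 i) /p.
have e0' : 0 < e := e0.
case: j => [[|[|[|[|k]]]] Hk] //; rewrite !mxE /= /ball /= ?subrr ?normr0 //.
rewrite sub0r normrN gtr0_norm //; rewrite /eps; lra.
Qed.

End S.

Theorem mainTheorem11 (R : realType) :
  closed (E R) /\
  (forall l : R, 0 <= l -> forall x, E R x -> E R (l *: x)) /\
  E R `&` [set - x | x in E R] = [set 0] /\
  conv_hull (E R) = minkowski_sum (minkowski_sum (E1 R) (E2 R)) (E3 R) /\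
  ~ closed (conv_hull (E R)) /\
  closure (conv_hull (E R)) (vec4 0 0 1 0) /\
  ~ conv_hull (E R) (vec4 0 0 1 0).
Proof.
rewrite convE; split; first exact: closedE.
split; first by move=> l l0 x; exact: EZ.
split; first exact: capE.
split => //.
split; first by move=> /closure_id hc; apply: (@notin R); rewrite hc; exact: inclos.
split; [exact: inclos|exact: notin].
Qed.
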